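(* (1) Let $\mathcal C$ and $\mathcal D$ be connected $\Delta$-complexes labeled over a common $B(X,P)$ and let $f\colon\mathcal D\to\mathcal C$ be an immersion commuting with the labelings. If $v\in\mathcal D^{(0)}$ and $u=f(v)$, then $L(\mathcal D,v)\subseteq L(\mathcal C,u)$, and $L(\mathcal D,v)$ is a closed inverse submonoid of $L(\mathcal C,u)$. (2) Conversely, let $\mathcal C$ be a connected $\Delta$-complex labeled over $B(X,P)$, let $u\in\mathcal C^{(0)}$ and let $H$ be a closed inverse submonoid of $M(X,P)$ with $H\subseteq L(\mathcal C,u)$. Then there exist a connected $\Delta$-complex $\mathcal D_H$ labeled over $B(X,P)$, an immersion $f_H\colon\mathcal D_H\to\mathcal C$ commuting with the labelings, and a $0$-cell $v\in\mathcal D_H$ with $f_H(v)=u$ and $L(\mathcal D_H,v)=H$; moreover $(\mathcal D_H,f_H,v)$ is unique up to isomorphism (a label-preserving cellular homeomorphism commuting with characteristic maps, with the immersions and preserving the base vertex). (3) If $H,K$ are closed inverse submonoids of $M(X,P)$ with $H,K\subseteq L(\mathcal C,u)$, then there is a homeomorphism $h\colon\mathcal D_H\to\mathcal D_K$ carrying cells to cells, commuting with the distinguished characteristic maps and with $f_K\circ h=f_H$ (not required to preserve base vertices) if and only if $H$ and $K$ are conjugate in $L(\mathcal C,u)$.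
   Context: A $\Delta$-complex is a CW-complex in which each $k$-cell $c$ has a distinguished characteristic map $\sigma_c\colon\Delta^k\to\mathcal C$, $\Delta^k=[v_0,\dots,v_k]$ the standard simplex with ordered vertices, such that the restriction of $\sigma_c$ to each $(k-1)$-face (identified order-preservingly with $\Delta^{k-1}$) is the distinguished characteristic map of a $(k-1)$-cell. The root of $c$ is $\sigma_c(v_0)$; a $1$-cell $e$ is directed from $\sigma_e(v_0)$ to $\sigma_e(v_1)$. All complexes are finite-dimensional; $\mathcal C^{(0)}$ denotes the set of $0$-cells. An immersion is a continuous map $f$ that is a local homeomorphism onto its image and commutes with characteristic maps: each $k$-cell $d$ maps onto a $k$-cell and $f\circ\sigma_d=\sigma_{f(d)}$. $B(X,P)$ is a $\Delta$-complex with one $0$-cell, $1$-cells indexed by $X$, $k$-cells ($2\le k\le n$) indexed by $P_k$, index sets pairwise disjoint, $P=\bigcup P_k$. A complex $\mathcal C$ is labeled over $B(X,P)$ via an immersion $f_{\mathcal C}\colon\mathcal C\to B(X,P)$, and $\ell(c)$ is the index of $f_{\mathcal C}(c)$; an immersion $g\colon\mathcal D\to\mathcal C$ commutes with the labelings if $f_{\mathcal C}\circ g=f_{\mathcal D}$. Boundary labels: for a $k$-cell $c$ ($k\ge2$) with characteristic map $\sigma$, let $c_i$ be the $(k-1)$-cell whose characteristic map is $\sigma$ restricted to the face omitting $v_i$, and $e(c)=\sigma([v_0,v_1])$; $bl(c)=\ell(\sigma[v_0,v_1])\ell(\sigma[v_1,v_2])\ell(\sigma[v_0,v_2])^{-1}$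 if $k=2$, $bl(c)=\ell(c_k)\cdots\ell(c_1)\ell(e(c))\ell(c_0)\ell(e(c))^{-1}$ if $k\ge3$; $bl(\rho)$ is the boundary label of the cell of $B(X,P)$ labeled $\rho$. $M(X,P)$ is the inverse monoid presented by generators $X\cup P$ and relations $\rho^2=\rho$, $\rho=\rho\,bl(\rho)$ for $\rho\in P$. $M(X,P)$ acts on the right by partial injections on $\mathcal C^{(0)}$: $v\cdot x=w$ iff there is a $1$-cell labeled $x\in X$ from $v$ to $w$; $v\cdot x^{-1}=w$ iff there is one from $w$ to $v$; $v\cdot\rho=v$ iff $v$ is the root of a cell labeled $\rho\in P$ (undefined otherwise); this extends to a well-defined action of $M(X,P)$. The loop monoid is $L(\mathcal C,v)=\{m\in M(X,P): v\cdot m=v\}$. Natural partial order: $a\le b$ iff $a=eb$ for an idempotent $e$. For $N\subseteq M$, $N^\omega=\{m: m\ge n\text{ for some }n\in N\}$; $N$ is closed if $N=N^\omega$. Two closed inverse submonoids $H,K$ are conjugate in $L$ if there is $m\in L$ with $mHm^{-1}\subseteq K$ and $m^{-1}Km\subseteq H$. *)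

(* Defs.v *)
(* Combinatorial (semi-simplicial)
   rendering of labeled Delta-complexes, immersions and the inverse monoid
   M(X,P) presented by generators and relations (as a congruence on words). *)
From mathcomp Require Import all_boot.
Set Implicit Arguments.
Unset Strict Implicit.
Unset Printing Implicit Defensive.

(* cell k = the k-cells;  face c i = the (k-1)-cell whose characteristic *)
(* map is the restriction of sigma_c to the face omitting v_i          *)
(* (only indices i <= k are meaningful).                               *)
Record DeltaComplex : Type := {
  cell : nat -> Type;
  face : forall k : nat, cell k.+1 -> nat -> cell k;
  face_face : forall (k : nat) (c : cell k.+2) (i j : nat),
      i < j -> j <= k.+2 ->
      face (face c j) i = face (face c i) j.-1
}.
Arguments face {d k} c i.

(* vertex number i of a k-cell, i.e. sigma_c(v_i) *)
Fixpoint vert (D : DeltaComplex) (k : nat) : cell D k -> nat -> cell D 0 :=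
  match k return cell D k -> nat -> cell D 0 with
  | 0 => fun c _ => c
  | k'.+1 => fun c i =>
      if i < k'.+1 then @vert D k' (face c k'.+1) i
      else @vert D k' (face c 0) i.-1
  end.

Definition root (D : DeltaComplex) (k : nat) (c : cell D k) : cell D 0 :=
  vert c 0.

(* a 1-cell e is directed from sigma_e(v_0) to sigma_e(v_1) *)
Definition src (D : DeltaComplex) (e : cell D 1) : cell D 0 := face e 1.
Definition tgt (D : DeltaComplex) (e : cell D 1) : cell D 0 := face e 0.

(* the edge sigma_c([v_0,v_1]) of a (m+1)-cell *)
Fixpoint front (D : DeltaComplex) (m : nat) : cell D m.+1 -> cell D 1 :=
  match m return cell D m.+1 -> cell D 1 with
  | 0 => fun c => c
  | m'.+1 => fun c => @front D m' (face c m'.+2)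
  end.

Definition is_morphism (D E : DeltaComplex)
    (f : forall k, cell D k -> cell E k) : Prop :=
  forall (k : nat) (c : cell D k.+1) (i : nat), i <= k.+1 ->
    f k (face c i) = face (f k.+1 c) i.

(* immersion: a morphism which is a local homeomorphism onto its image,
   i.e. injective on the corners at each vertex *)
Definition is_immersion (D E : DeltaComplex)
    (f : forall k, cell D k -> cell E k) : Prop :=
  is_morphism f /\
  forall (k : nat) (d d' : cell D k) (i : nat), i <= k ->
    vert d i = vert d' i -> f k d = f k d' -> d = d'.

Definition is_iso (D E : DeltaComplex)
    (h : forall k, cell D k -> cell E k) : Prop :=
  is_morphism h /\
  exists g : forall k, cell E k -> cell D k,
    is_morphism g /\ (forall k x, g k (h k x) = x) /\ (forall k y, h k (g k y) = y).

(* connectedness (of the 1-skeleton, equivalently of the complex) *)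
Inductive vconn (D : DeltaComplex) : cell D 0 -> cell D 0 -> Prop :=
| vc_refl x : vconn x x
| vc_edge (e : cell D 1) : vconn (src e) (tgt e)
| vc_sym x y : vconn x y -> vconn y x
| vc_trans x y z : vconn x y -> vconn y z -> vconn x z.

Definition connected (D : DeltaComplex) : Prop :=
  forall x y : cell D 0, vconn x y.

(* X = cell B 1, P_k = cell B k (k >= 2).                              *)
Definition single_vertex (B : DeltaComplex) : Prop :=
  exists b0 : cell B 0, forall b : cell B 0, b = b0.

Definition finite_dim (B : DeltaComplex) : Prop :=
  exists n : nat, forall k : nat, n < k -> cell B k -> False.

(* generators X u P : (j, c) with c a (j+1)-cell of B;
   j = 0 : c in X,  j >= 1 : c in P_{j+1} *)
Definition Gen (B : DeltaComplex) : Type := {j : nat & cell B j.+1}.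
(* a letter: a generator together with a flag "inverted" *)
Definition letter (B : DeltaComplex) : Type := (Gen B * bool)%type.
Definition word (B : DeltaComplex) : Type := seq (letter B).

Definition gpos (B : DeltaComplex) (j : nat) (c : cell B j.+1) : letter B :=
  (existT (fun j => cell B j.+1) j c, false).
Arguments gpos {B} j c.
Definition gneg (B : DeltaComplex) (j : nat) (c : cell B j.+1) : letter B :=
  (existT (fun j => cell B j.+1) j c, true).

Arguments gneg {B} j c.
Definition inv_word (A : Type) (w : seq (A * bool)) : seq (A * bool) :=
  rev (map (fun l => (l.1, ~~ l.2)) w).

(* boundary label of the cell of B labeled by a generator *)
Definition bl_gen (B : DeltaComplex) (j : nat) : cell B j.+1 -> word B :=
  match j return cell B j.+1 -> word B with
  | 0 => fun _ => [::]
  | 1 => fun c =>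
      [:: gpos 0 (face c 2); gpos 0 (face c 0); gneg 0 (face c 1)]
  | (m.+2)%N => fun c =>
      [seq gpos m.+1 (face c i) | i <- rev (iota 1 m.+3)] ++
      [:: gpos 0 (front c); gpos m.+1 (face c 0); gneg 0 (front c)]
  end.

(* congruence on words generated by a relation R and the Vagner relations:
   the words modulo icong R form the inverse monoid Inv< A | R > *)
Inductive icong (A : Type) (R : seq (A * bool) -> seq (A * bool) -> Prop)
  : seq (A * bool) -> seq (A * bool) -> Prop :=
| ic_rel u v : R u v -> icong R u v
| ic_refl u : icong R u u
| ic_sym u v : icong R u v -> icong R v u
| ic_trans u v w : icong R u v -> icong R v w -> icong R u w
| ic_ctx l r u v : icong R u v -> icong R (l ++ u ++ r) (l ++ v ++ r)
| ic_vagner1 u : icong R (u ++ inv_word u ++ u) u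
| ic_vagner2 u v :
    icong R (u ++ inv_word u ++ v ++ inv_word v) (v ++ inv_word v ++ u ++ inv_word u).

Definition Brel (B : DeltaComplex) (u v : word B) : Prop :=
  exists (j : nat) (c : cell B j.+2),
    (u = [:: gpos j.+1 c; gpos j.+1 c] /\ v = [:: gpos j.+1 c]) \/
    (u = [:: gpos j.+1 c] /\ v = gpos j.+1 c :: bl_gen c).

Definition Meq (B : DeltaComplex) : word B -> word B -> Prop := icong (@Brel B).

(* subsets of M(X,P) are represented by predicates on words *)
Definition inv_submonoid (B : DeltaComplex) (H : word B -> Prop) : Prop :=
  (forall u v, Meq u v -> H u -> H v) /\
  H [::] /\
  (forall u v, H u -> H v -> H (u ++ v)) /\
  (forall u, H u -> H (inv_word u)).

Definition Mle (B : DeltaComplex) (a b : word B) : Prop :=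
  exists e : word B, Meq (e ++ e) e /\ Meq a (e ++ b).

(* H is closed inside L : H^omega (computed in L) = H *)
Definition closed_in (B : DeltaComplex) (L H : word B -> Prop) : Prop :=
  forall a b, H a -> L b -> Mle a b -> H b.

Definition closed_inv_submonoid_of (B : DeltaComplex) (L H : word B -> Prop)
  : Prop := inv_submonoid H /\ (forall w, H w -> L w) /\ closed_in L H.

Definition closed_inv_submonoid (B : DeltaComplex) (H : word B -> Prop)
  : Prop := inv_submonoid H /\ closed_in (fun _ => True) H.

Definition subset_w (B : DeltaComplex) (H K : word B -> Prop) : Prop :=
  forall w, H w -> K w.

Definition conjugate_in (B : DeltaComplex) (L H K : word B -> Prop) : Prop :=
  exists m : word B, L m /\
    (forall h, H h -> K (m ++ h ++ inv_word m)) /\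
    (forall k, K k -> H (inv_word m ++ k ++ m)).

Definition act (B C : DeltaComplex) (fC : forall k, cell C k -> cell B k)
    (v : cell C 0) (l : letter B) (w : cell C 0) : Prop :=
  match l with
  | (existT j r, b) =>
    (match j return cell B j.+1 -> Prop with
     | 0 => fun a => exists e : cell C 1, fC 1 e = a /\
              (if b then src e = w /\ tgt e = v else src e = v /\ tgt e = w)
     | m.+1 => fun rho => w = v /\
              exists c : cell C m.+2, fC m.+2 c = rho /\ root c = v
     end) r
  end.

Fixpoint actw (B C : DeltaComplex) (fC : forall k, cell C k -> cell B k)
    (v : cell C 0) (w : word B) (u : cell C 0) : Prop :=
  match w with
  | [::] => u = v
  | l :: w' => exists v', act fC v l v' /\ actw fC v' w' u
  end.

Definition Loop (B C : DeltaComplex) (fC : forall k, cell C k -> cell B k)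
    (v : cell C 0) : word B -> Prop :=
  fun w => actw fC v w v.

Definition cover_data (B C : DeltaComplex) (fC : forall k, cell C k -> cell B k)
    (u : cell C 0) (H : word B -> Prop)
    (D : DeltaComplex) (fD : forall k, cell D k -> cell B k)
    (f : forall k, cell D k -> cell C k) (v : cell D 0) : Prop :=
  connected D /\ is_immersion fD /\ is_immersion f /\
  (forall k x, fC k (f k x) = fD k x) /\
  f 0 v = u /\ (forall w, Loop fD v w <-> H w).

(* Main.v *)
Require Import Defs.
From mathcomp Require Import all_boot.
Require Import Defs.
From Stdlib Require Import Setoid Morphisms ClassicalEpsilon ProofIrrelevance
  FunctionalExtensionality PropExtensionality.
From Stdlib Require List.
From mathcomp Require Import zify.
From Stdlib Require Import Lia.
Set Implicit Arguments.
Unset Strict Implicit.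
Unset Printing Implicit Defensive.

Lemma inv_wordK (T : Type) (w : seq (T * bool)) : inv_word (inv_word w) = w.
Proof.
rewrite /inv_word map_rev revK -map_comp.
elim: w => [|[a b] w IH] //=. by rewrite negbK IH.
Qed.

Lemma inv_word_cat (T : Type) (u v : seq (T * bool)) :
  inv_word (u ++ v) = inv_word v ++ inv_word u.
Proof. by rewrite /inv_word map_cat rev_cat. Qed.

Lemma inv_word_nil (T : Type) : inv_word ([::] : seq (T * bool)) = [::].
Proof. by []. Qed.

Lemma inv_word1 (T : Type) (a : T) b : inv_word [:: (a, b)] = [:: (a, ~~ b)].
Proof. by []. Qed.

#[global] Hint Resolve ic_refl : core.

Section IM.
Variables (A : Type) (R : seq (A * bool) -> seq (A * bool) -> Prop).
Local Notation E := (icong R).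
Local Notation inv := (@inv_word A).

#[global] Instance E_equiv : Equivalence (icong R).
Proof.
split.
- move=> x; exact: ic_refl.
- move=> x y; exact: ic_sym.
- move=> x y z; exact: ic_trans.
Qed.

#[global] Instance cat_proper : Proper (icong R ==> icong R ==> icong R) (@cat (A * bool)).
Proof.
move=> u u' H1 v v' H2.
apply: (ic_trans (ic_ctx [::] v H1)) => /=.
have := ic_ctx u' [::] H2. by rewrite !cats0.
Qed.

Lemma V1 u : E (u ++ inv u ++ u) u.
Proof. exact: ic_vagner1. Qed.

Lemma V1' u : E (inv u ++ u ++ inv u) (inv u).
Proof. have := ic_vagner1 R (inv u). by rewrite inv_wordK. Qed.

Lemma V2 u v : E (u ++ inv u ++ v ++ inv v) (v ++ inv v ++ u ++ inv u).
Proof. exact: ic_vagner2. Qed.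

Lemma inv_uniq a x y :
  E (a ++ x ++ a) a -> E (x ++ a ++ x) x -> E (a ++ y ++ a) a -> E (y ++ a ++ y) y ->
  E ((x ++ a) ++ (y ++ a)) ((y ++ a) ++ (x ++ a)) ->
  E ((a ++ x) ++ (a ++ y)) ((a ++ y) ++ (a ++ x)) -> E x y.
Proof.
move=> axa xax aya yay C1 C2.
have Hx : E x (y ++ a ++ x).
  rewrite -{1}xax -{1}aya.
  have -> : x ++ (a ++ y ++ a) ++ x = ((x ++ a) ++ (y ++ a)) ++ x by rewrite -!catA.
  rewrite C1 -!catA. by rewrite (catA x a x) -(catA x) xax.
have Hy : E y (y ++ a ++ x).
  rewrite -{1}yay -{1}axa.
  have -> : y ++ (a ++ x ++ a) ++ y = y ++ ((a ++ x) ++ (a ++ y)) by rewrite -!catA.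
  rewrite C2 -!catA. rewrite [X in E X _](_ : _ = (y ++ a ++ y) ++ a ++ x); last by rewrite -!catA. by rewrite yay.
exact: (ic_trans Hx (ic_sym Hy)).
Qed.

Lemma inv_E u v : E u v -> E (inv u) (inv v).
Proof.
move=> Huv. apply: (inv_uniq (a := v)).
- apply: (ic_trans _ Huv). rewrite -[in X in E _ X](V1 u).
  apply: cat_proper; [exact: ic_sym Huv|].
  apply: cat_proper; [reflexivity|exact: ic_sym Huv].
- rewrite -[in X in E _ X](V1' u). apply: cat_proper; [reflexivity|].
  apply: cat_proper; [exact: ic_sym Huv|reflexivity].
- exact: V1.
- exact: V1'.
- have h := V2 (inv u) (inv v). rewrite !inv_wordK in h.
  rewrite -!catA. apply: ic_trans (ic_trans (ic_ctx (inv u) (inv v ++ v) (ic_sym Huv)) h) _.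
  have := (ic_ctx (inv v ++ v ++ inv u) [::] Huv). by rewrite -!catA !cats0.
- have h := V2 u v. rewrite -!catA.
  apply: ic_trans (ic_trans (ic_ctx [::] (inv u ++ v ++ inv v) (ic_sym Huv)) h) _.
  have := (ic_ctx (v ++ inv v) (inv u) Huv). by rewrite -!catA.
Qed.

#[global] Instance inv_proper : Proper (icong R ==> icong R) (@inv_word A).
Proof. move=> u v; exact: inv_E. Qed.

Definition idem (e : seq (A * bool)) := E (e ++ e) e.

Lemma E_l l a b : E a b -> E (l ++ a) (l ++ b).
Proof. move=> h; have := ic_ctx l [::] h; by rewrite !cats0. Qed.
Lemma E_r r a b : E a b -> E (a ++ r) (b ++ r).
Proof. move=> h; exact: (ic_ctx [::] r h). Qed.

Lemma idem_inv e : idem e -> E (inv e) e.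
Proof.
move=> He.
have H1 : E (inv e) (e ++ inv e ++ inv e ++ e).
  apply: ic_trans (ic_sym (V1' e)) _.
  apply: ic_trans (ic_ctx (inv e) (inv e) (ic_sym He)) _.
  have h := V2 (inv e) e. rewrite inv_wordK in h. by rewrite -!catA.
have H3 : E (e ++ inv e) (inv e).
  rewrite [X in E _ X]H1 [X in E (_ ++ X) _]H1.
  by rewrite !catA He.
have H4 : E (inv e ++ e) (inv e).
  rewrite [X in E _ X]H1 [X in E (X ++ _) _]H1.
  by rewrite -!catA He.
by rewrite -[X in E _ X](V1 e) catA H3 H4.
Qed.

Lemma idem_uu u : idem (u ++ inv u).
Proof. rewrite /idem -!catA. have := E_r (inv u) (V1 u). by rewrite -!catA. Qed.

Lemma idem_uu' u : idem (inv u ++ u).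
Proof. have := idem_uu (inv u). by rewrite inv_wordK. Qed.

Lemma idem_E e e' : E e e' -> idem e -> idem e'.
Proof. move=> h; rewrite /idem. by rewrite h. Qed.

Lemma idem_self e : idem e -> E e (e ++ inv e).
Proof. move=> He. by rewrite idem_inv // He. Qed.

Lemma idem_comm e f : idem e -> idem f -> E (e ++ f) (f ++ e).
Proof.
move=> He Hf. rewrite (idem_self He) (idem_self Hf) -!catA. exact: V2.
Qed.

Lemma idem_cat e f : idem e -> idem f -> idem (e ++ f).
Proof.
move=> He Hf. rewrite /idem.
have -> : (e ++ f) ++ e ++ f = e ++ (f ++ e) ++ f by rewrite -!catA.
rewrite -(idem_comm He Hf).
have -> : e ++ (e ++ f) ++ f = (e ++ e) ++ (f ++ f) by rewrite -!catA.
by rewrite He Hf.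
Qed.

Lemma idem_nil : idem [::].
Proof. by []. Qed.

Lemma idem_inv_idem e : idem e -> idem (inv e).
Proof. move=> He; exact: idem_E (ic_sym (idem_inv He)) He. Qed.

Lemma uVu u : E (u ++ inv u ++ u) u.
Proof. exact: V1. Qed.

Lemma idem_conj m e : idem e -> idem (m ++ e ++ inv m).
Proof.
move=> He. rewrite /idem.
have -> : (m ++ e ++ inv m) ++ m ++ e ++ inv m = m ++ e ++ ((inv m ++ m) ++ e) ++ inv m
  by rewrite -!catA.
rewrite (idem_comm (idem_uu' m) He).
have -> : m ++ e ++ (e ++ inv m ++ m) ++ inv m = m ++ (e ++ e) ++ (inv m ++ m ++ inv m)
  by rewrite -!catA.
by rewrite He V1'.
Qed.

Definition Mle' a b := exists f, idem f /\ E a (f ++ b).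

Lemma L2 a e b : idem e -> Mle' (a ++ e ++ b) (a ++ b).
Proof.
move=> He. exists (a ++ e ++ inv a); split; first exact: idem_conj.
have -> : (a ++ e ++ inv a) ++ a ++ b = a ++ (e ++ (inv a ++ a)) ++ b by rewrite -!catA.
rewrite -(idem_comm (idem_uu' a) He).
have -> : a ++ ((inv a ++ a) ++ e) ++ b = (a ++ inv a ++ a) ++ e ++ b by rewrite -!catA.
by rewrite V1.
Qed.

Definition Fix a w := E (a ++ w) a.

Lemma Fix_E a w w' : E w w' -> Fix a w -> Fix a w'.
Proof. rewrite /Fix => h. by rewrite h. Qed.

Lemma Fix_cat a p q : Fix a p -> Fix a q -> Fix a (p ++ q).
Proof. rewrite /Fix => hp hq. by rewrite catA hp hq. Qed.

Lemma Fix_suffix a p q : Fix a p -> Fix a (p ++ q) -> Fix a q.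
Proof. rewrite /Fix => hp hpq. by rewrite -[X in E (X ++ _) _]hp -catA hpq. Qed.

Lemma Fix_trans a f w : Fix a f -> Fix f w -> Fix a w.
Proof. rewrite /Fix => h1 h2. by rewrite -[X in E (X ++ _) _]h1 -catA h2 h1. Qed.

Lemma Fix_nil a : Fix a [::].
Proof. by rewrite /Fix cats0. Qed.

Lemma Fix_idem a : idem a -> Fix a a.
Proof. by []. Qed.

Lemma Fix_left a w : idem a -> Fix a w -> E (inv w ++ a) a.
Proof.
rewrite /Fix => Ha h. have := inv_E h. rewrite inv_word_cat => h'.
rewrite -[X in E (_ ++ X) _](idem_inv Ha) h'. exact: idem_inv.
Qed.

Lemma Fix_inv a w : idem a -> Fix a w -> Fix a (inv w).
Proof.
move=> Ha h. rewrite /Fix.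
have h1 : E a (a ++ w ++ inv w).
  apply: ic_trans (ic_sym Ha) _.
  have e1 : E (a ++ a) ((a ++ w) ++ (inv w ++ a)) by rewrite h (Fix_left Ha h).
  rewrite e1.
  have -> : (a ++ w) ++ inv w ++ a = a ++ ((w ++ inv w) ++ a) by rewrite -!catA.
  rewrite -(idem_comm Ha (idem_uu w)).
  have -> : a ++ (a ++ w ++ inv w) = (a ++ a) ++ w ++ inv w by rewrite -!catA.
  by rewrite Ha.
have e2 : E (a ++ inv w) ((a ++ w) ++ inv w) by rewrite h.
rewrite e2 -catA. exact: ic_sym h1.
Qed.

Lemma Fix_uu a w : idem a -> Fix a w -> Fix a (w ++ inv w).
Proof. move=> Ha h; apply: Fix_cat h (Fix_inv Ha h). Qed.

Lemma Fix_prefix a p q : idem a -> Fix a (p ++ q) -> Fix a (p ++ inv p).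
Proof.
move=> Ha h. have h1 := Fix_uu Ha h. rewrite /Fix inv_word_cat in h1 *.
have e : E (a ++ p ++ inv p) ((a ++ (p ++ q) ++ (inv q ++ inv p)) ++ p ++ inv p)
  by rewrite h1.
rewrite e.
have -> : (a ++ (p ++ q) ++ inv q ++ inv p) ++ p ++ inv p =
  (a ++ p ++ q ++ inv q) ++ (inv p ++ p ++ inv p) by rewrite -!catA.
rewrite V1'.
have -> : (a ++ p ++ q ++ inv q) ++ inv p = a ++ (p ++ q) ++ inv q ++ inv p by rewrite -!catA.
exact: h1.
Qed.

Fixpoint allidem (p : seq (A * bool)) : Prop :=
  match p with [::] => True | l :: r => idem [:: l] /\ allidem r end.

Lemma allidem_idem p : allidem p -> idem p.
Proof.
elim: p => [|l r IH] /=; first by move=> _; exact: idem_nil.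
move=> [hl hr]. exact: (idem_cat hl (IH hr)).
Qed.

Lemma Fix_split a l r : idem a -> allidem (l :: r) -> Fix a (l :: r) ->
  Fix a [:: l] /\ Fix a r.
Proof.
move=> Ha [hl hr] h. have Hr := allidem_idem hr. rewrite /Fix in h *. split.
- have e : E (a ++ [:: l]) ((a ++ [:: l] ++ r) ++ [:: l]) by rewrite h.
  rewrite e.
  have -> : (a ++ [:: l] ++ r) ++ [:: l] = a ++ [:: l] ++ (r ++ [:: l]) by rewrite -!catA.
  rewrite (idem_comm Hr hl).
  have -> : a ++ [:: l] ++ ([:: l] ++ r) = a ++ ([:: l] ++ [:: l]) ++ r by rewrite -!catA.
  rewrite hl. exact: h.
- have e : E (a ++ r) ((a ++ [:: l] ++ r) ++ r) by rewrite h.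
  rewrite e.
  have -> : (a ++ [:: l] ++ r) ++ r = a ++ [:: l] ++ (r ++ r) by rewrite -!catA.
  by rewrite Hr.
Qed.

Lemma Fix_in a p l : idem a -> allidem p -> Fix a p -> List.In l p -> Fix a [:: l].
Proof.
move=> Ha; elim: p => [|l' r IH] //= hp hf [<-|hin].
- exact: (Fix_split Ha hp hf).1.
- apply: IH hp.2 _ hin. exact: (Fix_split Ha hp hf).2.
Qed.

Lemma Fix_allidem a p : idem a -> allidem p -> Fix a (p ++ inv p) -> Fix a p.
Proof.
move=> Ha hp h. apply: Fix_E h. have Hp := allidem_idem hp.
by rewrite (idem_inv Hp) Hp.
Qed.

End IM.

Unset Implicit Arguments.
Unset Strict Implicit.
Unset Printing Implicit Defensive.

Section Geom.
Variable D : DeltaComplex.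

Lemma root_S k (c : cell D k.+1) : root c = root (face c k.+1).
Proof. by []. Qed.

Lemma root_face k (c : cell D k.+1) i : 0 < i <= k.+1 -> root (face c i) = root c.
Proof.
elim: k c i => [|k IH] c i.
  by case: i => [|[|]].
move=> /andP [i0 ik]. rewrite [RHS]root_S.
case: (ltngtP i k.+2) ik => // [ilt _|-> _ //].
rewrite root_S (_ : face (face c i) k.+1 = face (face c k.+2) i); last by rewrite [RHS]face_face.
apply: IH. by rewrite i0.
Qed.

Lemma src_front m (c : cell D m.+1) : src (front c) = root c.
Proof.
elim: m c => [|m IH] c //=.
Qed.

Lemma tgt_front m (c : cell D m.+1) : tgt (front c) = root (face c 0).
Proof.
elim: m c => [|m IH] c //=. rewrite IH face_face //.
Qed.

Lemma front_face m (c : cell D m.+2) j : 2 <= j <= m.+2 -> front (face c j) = front c.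
Proof.
elim: m c j => [|m IH] c j.
  by case: j => [|[|[|]]].
move=> /andP [j2 jm].
case: (ltngtP j m.+3) jm => // [jlt _|-> _ //].
have -> : front (face c j) = front (face (face c m.+3) j).
  rewrite [LHS]/= (_ : face (face c j) m.+2 = face (face c m.+3) j) //.
  by rewrite [RHS]face_face.
rewrite IH //. by rewrite j2.
Qed.

Lemma front_face0 m (c : cell D m.+3) :
  front (face c 0) = front (face (face c m.+3) 0).
Proof. by rewrite [in RHS]face_face. Qed.

Lemma front_face1 m (c : cell D m.+3) :
  front (face c 1) = front (face (face c m.+3) 1).
Proof. by rewrite [in RHS]face_face. Qed.

End Geom.

Section Morph.
Variables (D E : DeltaComplex) (f : forall k, cell D k -> cell E k).
Hypothesis Hf : is_morphism f.

Lemma morph_root k (c : cell D k) : f 0 (root c) = root (f k c).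
Proof.
elim: k c => [|k IH] c //. by rewrite root_S IH Hf // -root_S.
Qed.

Lemma morph_vert k (c : cell D k) i : f 0 (vert c i) = vert (f k c) i.
Proof.
elim: k c i => [|k IH] c i //=.
case: ifP => _; by rewrite IH Hf.
Qed.

Lemma morph_front m (c : cell D m.+1) : f 1 (front c) = front (f m.+1 c).
Proof.
elim: m c => [|m IH] c //=. by rewrite IH Hf.
Qed.

Lemma morph_src (e : cell D 1) : f 0 (src e) = src (f 1 e).
Proof. by rewrite /src Hf. Qed.
Lemma morph_tgt (e : cell D 1) : f 0 (tgt e) = tgt (f 1 e).
Proof. by rewrite /tgt Hf. Qed.
End Morph.

Lemma inv_word_cons (T : Type) (l : T * bool) w :
  inv_word (l :: w) = inv_word w ++ [:: (l.1, ~~ l.2)].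
Proof. by rewrite /inv_word /= rev_cons cats1. Qed.

Section Act.
Variables (B D : DeltaComplex) (fD : forall k, cell D k -> cell B k).
Hypothesis HfD : is_immersion fD.

Lemma edge_src_inj (e e' : cell D 1) : src e = src e' -> fD 1 e = fD 1 e' -> e = e'.
Proof. move=> h1 h2. exact: (HfD.2 1 e e' 0 erefl h1 h2). Qed.

Lemma edge_tgt_inj (e e' : cell D 1) : tgt e = tgt e' -> fD 1 e = fD 1 e' -> e = e'.
Proof. move=> h1 h2. exact: (HfD.2 1 e e' 1 erefl h1 h2). Qed.

Lemma cell_root_inj k (d d' : cell D k) : root d = root d' -> fD k d = fD k d' -> d = d'.
Proof. move=> h1 h2. exact: (HfD.2 k d d' 0 (leq0n k) h1 h2). Qed.

Lemma act_fun v l w w' : act fD v l w -> act fD v l w' -> w = w'.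
Proof.
case: l => [[[|j] r] b] /=.
- case: b => [[e [he [h1 h2]]] [e' [he' [h1' h2']]]|[e [he [h1 h2]]] [e' [he' [h1' h2']]]].
  + have ee : e = e' by apply: edge_tgt_inj; rewrite ?h2 ?h2' ?he ?he'.
    by rewrite -h1 -h1' ee.
  + have ee : e = e' by apply: edge_src_inj; rewrite ?h1 ?h1' ?he ?he'.
    by rewrite -h2 -h2' ee.
- by move=> [-> _] [-> _].
Qed.

Lemma act_swap v l w : act fD v (l.1, ~~ l.2) w <-> act fD w l v.
Proof.
case: l => [[[|j] r] b] /=.
- case: b => /=; split; move=> [e [he [h1 h2]]]; exists e; by split.
- split; move=> [-> h]; by split.
Qed.

Lemma actw_cat v u w x :
  actw fD v (u ++ w) x <-> exists y, actw fD v u y /\ actw fD y w x.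
Proof.
elim: u v => [|l u IH] v /=.
- split; [move=> h; by exists v | by move=> [y [-> h]]].
- split.
  + move=> [v' [h1 h2]]. have [y [h3 h4]] := (IH v').1 h2. exists y; split=> //. by exists v'.
  + move=> [y [[v' [h1 h2]] h3]]. exists v'; split=> //. apply/IH. by exists y.
Qed.

Lemma actw1 v l w : actw fD v [:: l] w <-> act fD v l w.
Proof. split=> /=; [by move=> [v' [h ->]] | move=> h; by exists w]. Qed.

Lemma actw_inv v w x : actw fD v (inv_word w) x <-> actw fD x w v.
Proof.
elim: w v x => [|l w IH] v x /=.
- by split=> ->.
- rewrite inv_word_cons. split.
  + move=> /actw_cat [y [h1 /actw1 h2]]. exists y; split.
    * by apply/act_swap.
    * by apply/IH.
  + move=> [y [h1 h2]]. apply/actw_cat. exists y; split.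
    * by apply/IH.
    * apply/actw1. by apply/act_swap.
Qed.

Lemma actw_fun v w x x' : actw fD v w x -> actw fD v w x' -> x = x'.
Proof.
elim: w v => [|l w IH] v /=; first by move=> -> ->.
move=> [y [h1 h2]] [y' [h1' h2']].
have yy := act_fun _ _ _ _ h1 h1'. subst y'. exact: IH h2 h2'.
Qed.

Lemma actw_inj v v' w x : actw fD v w x -> actw fD v' w x -> v = v'.
Proof.
move=> h1 h2. apply: (actw_fun x (inv_word w)); by apply/actw_inv.
Qed.

Lemma actw_uu v w x : actw fD v (w ++ inv_word w) x <-> x = v /\ exists y, actw fD v w y.
Proof.
split.
- move=> /actw_cat [y [h1 /actw_inv h2]]. split; last by exists y.
  exact: (actw_inj _ _ _ _ h2 h1).
- move=> [-> [y h]]. apply/actw_cat. exists y; split=> //. by apply/actw_inv.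
Qed.

Lemma bl_walk j (c : cell D j.+2) : actw fD (root c) (bl_gen (fD j.+2 c)) (root c).
Proof.
have Hm := HfD.1.
case: j c => [|m] c.
- rewrite /=. exists (tgt (face c 2)); split.
    exists (face c 2); split; first by rewrite Hm.
    by split.
  exists (tgt (face c 0)); split.
    exists (face c 0); split; first by rewrite Hm.
    split=> //. rewrite /src /tgt [RHS]face_face //.
  exists (root c); split=> //.
  exists (face c 1); rewrite Hm //; split=> //. split.
  + rewrite /src /= /root /= /src. by rewrite [in RHS]face_face.
  + rewrite /tgt. by rewrite face_face.
- rewrite /bl_gen. apply/actw_cat. exists (root c); split.
  + have : forall i, i \in rev (iota 1 m.+3) -> 0 < i <= m.+3.
      move=> i. rewrite mem_rev mem_iota. by rewrite add1n ltnS.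
    elim: (rev (iota 1 m.+3)) => [|i s IH] //= hs.
    exists (root c); split.
    * split=> //. exists (face c i); split; first by rewrite Hm //; case/andP: (hs i (mem_head _ _)).
      apply: root_face. exact: hs i (mem_head _ _).
    * apply: IH => i' hi'. apply: hs. by rewrite in_cons hi' orbT.
  + exists (root (face c 0)); split.
      exists (front c); split; first by rewrite (morph_front _ _ _ Hm).
      by rewrite src_front tgt_front.
    exists (root (face c 0)); split.
      split=> //. exists (face c 0); split=> //. by rewrite Hm.
    exists (root c); split=> //.
    exists (front c); split; first by rewrite (morph_front _ _ _ Hm).
    by rewrite src_front tgt_front.
Qed.

End Act.

Section Act2.
Variables (B D : DeltaComplex) (fD : forall k, cell D k -> cell B k).
Hypothesis HfD : is_immersion fD.

Lemma actw_E u v : Meq u v -> forall x y, actw fD x u y <-> actw fD x v y.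
Proof.
elim=> {u v}.
- move=> u v [j [c [[-> ->]|[-> ->]]]] x y.
  + split.
    * move=> [x1 [[-> h] [x2 [[-> _] ->]]]]. by exists x; split.
    * move=> [x1 [[-> h] ->]]. exists x; split=> //. by exists x.
  + split.
    * move=> [x1 [[-> [c' [h1 h2]]] ->]]. exists x; split; first by split=> //; exists c'.
      have := bl_walk _ _ _ HfD _ c'. by rewrite h1 h2.
    * move=> [x1 [[-> [c' [h1 h2]]] hb]]. exists x; split; first by split=> //; exists c'.
      have := bl_walk _ _ _ HfD _ c'. rewrite h1 h2 => hb'. exact: (actw_fun _ _ _ HfD _ _ _ _ hb hb').
- by [].
- move=> u v _ h x y. by rewrite h.
- move=> u v w _ h1 _ h2 x y. by rewrite h1 h2.
- move=> l r u v _ h x y. rewrite !(actw_cat _ _ fD). split.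
  + move=> [y1 [h1 /(actw_cat _ _ fD) [y2 [h2 h3]]]]. exists y1; split=> //. apply/(actw_cat _ _ fD).
    exists y2; split=> //. by apply/h.
  + move=> [y1 [h1 /(actw_cat _ _ fD) [y2 [h2 h3]]]]. exists y1; split=> //. apply/(actw_cat _ _ fD).
    exists y2; split=> //. by apply/h.
- move=> u x y. rewrite catA (actw_cat _ _ fD). split.
  + move=> [z [/(actw_uu _ _ _ HfD) [-> _] h]]. exact: h.
  + move=> h. exists x; split=> //. apply/(actw_uu _ _ _ HfD). split=> //. by exists y.
- move=> u v x y.
  have key : forall a b, actw fD x (a ++ inv_word a ++ b ++ inv_word b) y <->
     y = x /\ (exists z, actw fD x a z) /\ (exists z, actw fD x b z).
    move=> a b. rewrite catA (actw_cat _ _ fD). split.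
    + move=> [z [/(actw_uu _ _ _ HfD) [-> ha] /(actw_uu _ _ _ HfD) [-> hb]]]. by [].
    + move=> [-> [ha hb]]. exists x. split; apply/(actw_uu _ _ _ HfD); by split.
  rewrite !key. tauto.
Qed.

Lemma idem_act e x y : Meq (e ++ e) e -> actw fD x e y -> y = x.
Proof.
move=> He h. have h1 := idem_self He.
have := (actw_E _ _ h1 x y).1 h. by move=> /(actw_uu _ _ _ HfD) [].
Qed.

Lemma vconn_word x y : vconn x y -> exists m, actw fD x m y.
Proof.
elim=> {x y}.
- move=> x; by exists [::].
- move=> e. exists [:: gpos 0 (fD 1 e)]. apply/(actw1 _ _ fD). by exists e.
- move=> x y _ [m h]. exists (inv_word m). by apply/(actw_inv _ _ fD).
- move=> x y z _ [m1 h1] _ [m2 h2]. exists (m1 ++ m2). apply/(actw_cat _ _ fD). by exists y.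
Qed.

End Act2.

Section MorphAct.
Variables (B D E : DeltaComplex) (fD : forall k, cell D k -> cell B k)
  (fE : forall k, cell E k -> cell B k) (f : forall k, cell D k -> cell E k).
Hypothesis Hf : is_morphism f.
Hypothesis Hc : forall k x, fE k (f k x) = fD k x.

Lemma morph_act v l w : act fD v l w -> act fE (f 0 v) l (f 0 w).
Proof.
case: l => [[[|j] r] b] /=.
- move=> [e [he hb]]. exists (f 1 e). rewrite Hc he -(morph_src _ _ _ Hf) -(morph_tgt _ _ _ Hf).
  split=> //. case: b hb => [[-> ->]|[-> ->]]; by split.
- move=> [-> [c [hc hr]]]. split=> //. exists (f _ c). by rewrite Hc -(morph_root _ _ _ Hf) hr.
Qed.

Lemma morph_actw v w x : actw fD v w x -> actw fE (f 0 v) w (f 0 x).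
Proof.
elim: w v => [|l w IH] v /=; first by move=> ->.
move=> [y [h1 h2]]. exists (f 0 y); split; [exact: morph_act | exact: IH].
Qed.
End MorphAct.

Unset Implicit Arguments.
Unset Strict Implicit.
Unset Printing Implicit Defensive.

Definition cid (B : DeltaComplex) (k : nat) : cell B k -> word B :=
  match k return cell B k -> word B with
  | 0 => fun _ => [::]
  | 1 => fun x => [:: gpos 0 x; gneg 0 x]
  | j.+2 => fun r => [:: gpos j.+1 r]
  end.

Section CID.
Variables (B D : DeltaComplex) (fD : forall k, cell D k -> cell B k).
Hypothesis HfD : is_immersion fD.

Lemma cid1 k (d : cell D k) : actw fD (root d) (cid B k (fD k d)) (root d).
Proof.
case: k d => [|[|j]] d /=.
- by [].
- exists (tgt d); split; first by exists d.
  exists (root d); split=> //. by exists d.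
- exists (root d); split=> //. split=> //. by exists d.
Qed.

Lemma cid2 k (l : cell B k) y z : single_vertex B ->
  actw fD y (cid B k l) z -> exists d : cell D k, fD k d = l /\ root d = y.
Proof.
move=> [b0 Hb]. case: k l => [|[|j]] l /=.
- move=> _. exists y; split=> //. by rewrite (Hb l) (Hb (fD 0 y)).
- move=> [y1 [[e [he [h1 h2]]] _]]. by exists e.
- move=> [y1 [[_ [c [h1 h2]]] _]]. by exists c.
Qed.
End CID.

Section Part1.
Variables (B C D : DeltaComplex) (fC : forall k, cell C k -> cell B k)
  (fD : forall k, cell D k -> cell B k) (f : forall k, cell D k -> cell C k).
Hypotheses (HfC : is_immersion fC) (HfD : is_immersion fD) (Hf : is_immersion f)
  (Hc : forall k x, fC k (f k x) = fD k x).

Lemma part1 v : subset_w (Loop fD v) (Loop fC (f 0 v)) /\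
        closed_inv_submonoid_of (Loop fC (f 0 v)) (Loop fD v).
Proof.
have sub : subset_w (Loop fD v) (Loop fC (f 0 v)).
  move=> w h. exact: (morph_actw _ _ _ fD fC f Hf.1 Hc _ _ _ h).
split=> //. split; last split=> //.
- split; [|split; [|split]].
  + move=> u w h hu. exact: (proj1 (actw_E _ _ fD HfD u w h v v) hu).
  + by [].
  + move=> a b ha hb. apply/(actw_cat _ _ fD). by exists v.
  + move=> a ha. by apply/(actw_inv _ _ fD).
- move=> a b ha _ [e [He Hab]].
  have := proj1 (actw_E _ _ fD HfD _ _ Hab v v) ha.
  move=> /(actw_cat _ _ fD) [z [hz hb]].
  have zv := idem_act _ _ fD HfD _ _ _ He hz. by rewrite zv in hb.
Qed.
End Part1.

Section Uniq.
Variables (B C : DeltaComplex) (fC : forall k, cell C k -> cell B k).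
Hypothesis HB1 : single_vertex B.
Hypothesis HfC : is_immersion fC.
Variable u : cell C 0.
Variables (D1 : DeltaComplex) (fD1 : forall k, cell D1 k -> cell B k)
  (f1 : forall k, cell D1 k -> cell C k) (v1 : cell D1 0).
Variables (D2 : DeltaComplex) (fD2 : forall k, cell D2 k -> cell B k)
  (f2 : forall k, cell D2 k -> cell C k) (v2 : cell D2 0).
Hypotheses (Hcon1 : connected D1) (HfD1 : is_immersion fD1) (Hf1 : is_immersion f1)
  (Hc1 : forall k x, fC k (f1 k x) = fD1 k x) (Hv1 : f1 0 v1 = u).
Hypotheses (Hcon2 : connected D2) (HfD2 : is_immersion fD2) (Hf2 : is_immersion f2)
  (Hc2 : forall k x, fC k (f2 k x) = fD2 k x) (Hv2 : f2 0 v2 = u).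
Hypothesis HL : forall w, Loop fD1 v1 w <-> Loop fD2 v2 w.

Definition P12 k (d1 : cell D1 k) (d2 : cell D2 k) :=
  f2 k d2 = f1 k d1 /\ exists m, actw fD1 v1 m (root d1) /\ actw fD2 v2 m (root d2).

Lemma P12_ex k (d1 : cell D1 k) : exists d2, P12 k d1 d2.
Proof.
have [m hm] := vconn_word _ _ fD1 _ _ (Hcon1 v1 (root d1)).
have hl : Loop fD1 v1 (m ++ cid B k (fD1 k d1) ++ inv_word m).
  apply/(actw_cat _ _ fD1). exists (root d1); split=> //.
  apply/(actw_cat _ _ fD1). exists (root d1); split; first exact: cid1.
  by apply/(actw_inv _ _ fD1).
move: (proj1 (HL _) hl) => /(actw_cat _ _ fD2) [y2 [hy2 /(actw_cat _ _ fD2) [z [hz hinv]]]].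
move/(actw_inv _ _ fD2): hinv => hz'.
have zy := actw_fun _ _ _ HfD2 _ _ _ _ hz' hy2. subst z.
have [d2 [hd2 hr2]] := cid2 _ _ fD2 _ _ _ _ HB1 hz.
exists d2. split; last by exists m; rewrite hr2.
apply: (cell_root_inj _ _ fC HfC).
- rewrite -(morph_root _ _ _ Hf2.1) -(morph_root _ _ _ Hf1.1) hr2.
  have a1 := morph_actw _ _ _ fD1 fC f1 Hf1.1 Hc1 _ _ _ hm.
  have a2 := morph_actw _ _ _ fD2 fC f2 Hf2.1 Hc2 _ _ _ hy2.
  rewrite Hv1 in a1; rewrite Hv2 in a2. exact: (actw_fun _ _ _ HfC _ _ _ _ a2 a1).
- by rewrite Hc1 Hc2 hd2.
Qed.

Lemma P12_uniq k (d1 : cell D1 k) d2 d2' : P12 k d1 d2 -> P12 k d1 d2' -> d2 = d2'.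
Proof.
move=> [h1 [m [hm1 hm2]]] [h1' [m' [hm1' hm2']]].
have hl : Loop fD1 v1 (m ++ inv_word m').
  apply/(actw_cat _ _ fD1). exists (root d1); split=> //. by apply/(actw_inv _ _ fD1).
move: (proj1 (HL _) hl) => /(actw_cat _ _ fD2) [z [hz /(actw_inv _ _ fD2) hz']].
have e1 := actw_fun _ _ _ HfD2 _ _ _ _ hz hm2.
have e2 := actw_fun _ _ _ HfD2 _ _ _ _ hz' hm2'.
apply: (cell_root_inj _ _ f2 Hf2); first by rewrite -e1 -e2.
by rewrite h1 h1'.
Qed.

Lemma P12_face k (d1 : cell D1 k.+1) d2 i : i <= k.+1 -> P12 k.+1 d1 d2 ->
  P12 k (face d1 i) (face d2 i).
Proof.
move=> hi [h1 [m [hm1 hm2]]]. split; first by rewrite Hf2.1 // h1 -Hf1.1.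
case: i hi => [|i] hi.
- exists (m ++ [:: gpos 0 (fD1 1 (front d1))]). split.
  + apply/(actw_cat _ _ fD1). exists (root d1); split=> //. apply/(actw1 _ _ fD1).
    exists (front d1). split=> //. by rewrite src_front tgt_front.
  + apply/(actw_cat _ _ fD2). exists (root d2); split=> //. apply/(actw1 _ _ fD2).
    exists (front d2). rewrite src_front tgt_front. split=> //.
    rewrite (morph_front _ _ _ HfD2.1) (morph_front _ _ _ HfD1.1) -Hc1 -Hc2. by rewrite h1.
- exists m. rewrite !root_face //.
Qed.
End Uniq.

Lemma uniq_cover (B C : DeltaComplex) (fC : forall k, cell C k -> cell B k)
  (HB1 : single_vertex B) (HfC : is_immersion fC) (u : cell C 0) (H : word B -> Prop)
  (D1 : DeltaComplex) (fD1 : forall k, cell D1 k -> cell B k)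
  (f1 : forall k, cell D1 k -> cell C k) (v1 : cell D1 0)
  (D2 : DeltaComplex) (fD2 : forall k, cell D2 k -> cell B k)
  (f2 : forall k, cell D2 k -> cell C k) (v2 : cell D2 0) :
  cover_data fC u H fD1 f1 v1 -> cover_data fC u H fD2 f2 v2 ->
  exists h : forall k, cell D1 k -> cell D2 k,
    is_iso h /\ (forall k x, fD2 k (h k x) = fD1 k x) /\
    (forall k x, f2 k (h k x) = f1 k x) /\ h 0 v1 = v2.
Proof.
move=> [Hcon1 [HfD1 [Hf1 [Hc1 [Hv1 HL1]]]]] [Hcon2 [HfD2 [Hf2 [Hc2 [Hv2 HL2]]]]].
have HL : forall w, Loop fD1 v1 w <-> Loop fD2 v2 w.
  move=> w. by rewrite HL1 HL2.
have HL' : forall w, Loop fD2 v2 w <-> Loop fD1 v1 w.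
  move=> w. by rewrite HL.
set P := P12 B C D1 fD1 f1 v1 D2 fD2 f2 v2.
set Q := P12 B C D2 fD2 f2 v2 D1 fD1 f1 v1.
have PQ : forall k d1 d2, P k d1 d2 -> Q k d2 d1.
  move=> k d1 d2 [e [m [h1 h2]]]. split=> //. by exists m.
have QP : forall k d1 d2, Q k d2 d1 -> P k d1 d2.
  move=> k d1 d2 [e [m [h1 h2]]]. split=> //. by exists m.
have EXh : forall k d1, exists d2, P k d1 d2.
  exact: (P12_ex B C fC HB1 HfC u D1 fD1 f1 v1 D2 fD2 f2 v2 Hcon1 Hf1 Hc1 Hv1 HfD2 Hf2 Hc2 Hv2 HL).
have EXg : forall k d2, exists d1, Q k d2 d1.
  exact: (P12_ex B C fC HB1 HfC u D2 fD2 f2 v2 D1 fD1 f1 v1 Hcon2 Hf2 Hc2 Hv2 HfD1 Hf1 Hc1 Hv1 HL').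
pose h k d1 := proj1_sig (constructive_indefinite_description _ (EXh k d1)).
pose g k d2 := proj1_sig (constructive_indefinite_description _ (EXg k d2)).
have hP : forall k d1, P k d1 (h k d1).
  move=> k d1. exact: proj2_sig (constructive_indefinite_description _ (EXh k d1)).
have gQ : forall k d2, Q k d2 (g k d2).
  move=> k d2. exact: proj2_sig (constructive_indefinite_description _ (EXg k d2)).
have hU : forall k d1 d2, P k d1 d2 -> h k d1 = d2.
  move=> k d1 d2 p. exact: (P12_uniq B C D1 fD1 f1 v1 D2 fD2 f2 v2 HfD2 Hf2 HL k d1 _ _ (hP k d1) p).
have gU : forall k d2 d1, Q k d2 d1 -> g k d2 = d1.
  move=> k d2 d1 p. exact: (P12_uniq B C D2 fD2 f2 v2 D1 fD1 f1 v1 HfD1 Hf1 HL' k d2 _ _ (gQ k d2) p).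
have gh : forall k x, g k (h k x) = x.
  move=> k x. apply: gU. apply: PQ. exact: hP.
have hg : forall k y, h k (g k y) = y.
  move=> k y. apply: hU. apply: QP. exact: gQ.
have hM : is_morphism h.
  move=> k c i hi. apply: hU.
  exact: (P12_face B C fC D1 fD1 f1 v1 D2 fD2 f2 v2 HfD1 Hf1 Hc1 HfD2 Hf2 Hc2 k c _ i hi (hP _ c)).
exists h. split; [|split; [|split]].
- split=> //. exists g. split; last by split.
  move=> k c i hi. rewrite -{1}(hg _ c) -hM // gh //.
- move=> k x. by rewrite -Hc2 (hP k x).1 Hc1.
- move=> k x. exact: (hP k x).1.
- apply: hU. split; first by rewrite Hv1 Hv2. by exists [::].
Qed.

Lemma Hclosed_le (B : DeltaComplex) (H : word B -> Prop) :
  closed_inv_submonoid H -> forall a b, H a -> Mle' (@Brel B) a b -> H b.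
Proof. move=> [_ hc] a b ha hab. exact: (hc a b ha I hab). Qed.

Lemma part3 (B C : DeltaComplex) (fC : forall k, cell C k -> cell B k)
  (HB1 : single_vertex B) (HfC : is_immersion fC) (u : cell C 0) (H K : word B -> Prop)
  (HH : closed_inv_submonoid H) (HK : closed_inv_submonoid K)
  (DH : DeltaComplex) (fDH : forall k, cell DH k -> cell B k)
  (fH : forall k, cell DH k -> cell C k) (vH : cell DH 0)
  (DK : DeltaComplex) (fDK : forall k, cell DK k -> cell B k)
  (fK : forall k, cell DK k -> cell C k) (vK : cell DK 0) :
  cover_data fC u H fDH fH vH -> cover_data fC u K fDK fK vK ->
  ((exists h : forall k, cell DH k -> cell DK k,
      is_iso h /\ (forall k x, fK k (h k x) = fH k x)) <->
   conjugate_in (Loop fC u) H K).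
Proof.
move=> cdH cdK.
have cdH' := cdH. have cdK' := cdK.
move: cdH' cdK' => [HconH [HfDH [HfH [HcH [HvH HLH]]]]] [HconK [HfDK [HfK [HcK [HvK HLK]]]]].
split.
- move=> [h [[hM [g [gM [gh hg]]]] hc]].
  have hcD : forall k x, fDK k (h k x) = fDH k x by move=> k x; rewrite -HcK hc HcH.
  have gcD : forall k y, fDH k (g k y) = fDK k y by move=> k y; rewrite -hcD hg.
  set w := h 0 vH.
  have Lw : forall x, Loop fDK w x <-> H x.
    move=> x. rewrite -HLH. split.
    + move=> hx. have := morph_actw _ _ _ fDK fDH g gM gcD _ _ _ hx. by rewrite /w gh.
    + move=> hx. exact: (morph_actw _ _ _ fDH fDK h hM hcD _ _ _ hx).
  have [m hm] := vconn_word _ _ fDK _ _ (HconK vK w).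
  exists m. split; [|split].
  + have := morph_actw _ _ _ fDK fC fK HfK.1 HcK _ _ _ hm. by rewrite HvK /w hc HvH.
  + move=> x hx. apply/HLK. apply/(actw_cat _ _ fDK). exists w; split=> //.
    apply/(actw_cat _ _ fDK). exists w; split; first by apply/Lw.
    by apply/(actw_inv _ _ fDK).
  + move=> x hx. apply/Lw. apply/(actw_cat _ _ fDK). exists vK; split; first by apply/(actw_inv _ _ fDK).
    apply/(actw_cat _ _ fDK). exists vK; split=> //. by apply/HLK.
- move=> [m [hm [c1 c2]]].
  have hK0 : K (m ++ [::] ++ inv_word m) by apply: c1; exact: HH.1.2.1.
  move: (proj2 (HLK _) hK0) => /(actw_cat _ _ fDK) [w [hw /(actw_cat _ _ fDK) [w' [hw' _]]]].
  simpl in hw'. subst w'.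
  have fw : fK 0 w = u.
    have := morph_actw _ _ _ fDK fC fK HfK.1 HcK _ _ _ hw. rewrite HvK => a.
    exact: (actw_fun _ _ _ HfC _ _ _ _ a hm).
  have Lw : forall x, Loop fDK w x <-> H x.
    move=> x. split.
    + move=> hx. have hk : K (m ++ x ++ inv_word m).
        apply/HLK. apply/(actw_cat _ _ fDK). exists w; split=> //.
        apply/(actw_cat _ _ fDK). exists w; split=> //. by apply/(actw_inv _ _ fDK).
      have h2 := c2 _ hk.
      have l1 := @L2 _ (@Brel B) [::] (inv_word m ++ m) (x ++ (inv_word m ++ m)) (idem_uu' _ _).
      rewrite /= -!catA in l1. rewrite -!catA in h2.
      have h3 := Hclosed_le _ _ HH _ _ h2 l1.
      have l2 := @L2 _ (@Brel B) x (inv_word m ++ m) [::] (idem_uu' _ _).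
      rewrite cats0 in l2. have h4 := Hclosed_le _ _ HH _ _ h3 l2.
      by rewrite cats0 in h4.
    + move=> hx. have hk := c1 _ hx.
      move: (proj2 (HLK _) hk) => /(actw_cat _ _ fDK) [a [ha /(actw_cat _ _ fDK) [b [hb /(actw_inv _ _ fDK) hb']]]].
      have aw := actw_fun _ _ _ HfDK _ _ _ _ ha hw. subst a.
      have bw := actw_fun _ _ _ HfDK _ _ _ _ hb' hw. subst b. exact: hb.
  have cdK2 : cover_data fC u H fDK fK w.
    split=> //; split=> //; split=> //; split=> //; split=> //.
  have [h [hiso [_ [hc _]]]] := uniq_cover B C fC HB1 HfC u H DH fDH fH vH DK fDK fK w cdH cdK2.
  by exists h.
Qed.

Unset Implicit Arguments.
Unset Strict Implicit.
Unset Printing Implicit Defensive.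

Local Notation inv := inv_word.

Lemma In_map_mem (T : Type) (f : nat -> T) (s : seq nat) i :
  i \in s -> List.In (f i) [seq f j | j <- s].
Proof.
elim: s => [|a s IH] //=. rewrite in_cons => /orP [/eqP ->|h]; [by left | right; exact: IH].
Qed.

Section BFacts.
Variable B : DeltaComplex.
Local Notation E := (icong (@Brel B)).
Local Notation idemB := (idem (@Brel B)).
Local Notation FixB := (Fix (@Brel B)).

Lemma idem_rho j (r : cell B j.+2) : idemB [:: gpos j.+1 r].
Proof. apply: ic_rel. exists j, r. by left. Qed.

Lemma Fix_bl j (r : cell B j.+2) : FixB [:: gpos j.+1 r] (bl_gen r).
Proof. apply: ic_sym. apply: ic_rel. exists j, r. by right. Qed.

Lemma idem_cid k (l : cell B k) : idemB (cid B k l).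
Proof.
case: k l => [|[|j]] l.
- exact: idem_nil.
- exact: (idem_uu _ [:: gpos 0 l]).
- exact: idem_rho.
Qed.

Lemma FT m (r : cell B m.+2) :
  FixB (cid B m.+2 r) [:: gpos 0 (front r); gpos 0 (front (face r 0)); gneg 0 (front (face r 1))].
Proof.
elim: m r => [|m IH] r.
- exact: Fix_bl.
- have hb := Fix_bl m.+1 r. rewrite /bl_gen in hb.
  set P := [seq gpos m.+1 (face r i) | i <- rev (iota 1 m.+3)] in hb.
  have hP : allidem (@Brel B) P.
    rewrite /P. elim: (rev (iota 1 m.+3)) => [|i s IHs] //=. split=> //. exact: idem_rho.
  have hr := idem_rho m.+1 r.
  have fP : FixB [:: gpos m.+2 r] P.
    apply: Fix_allidem => //. exact: (@Fix_prefix _ _ _ P _ hr hb).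
  have ftop : FixB [:: gpos m.+2 r] [:: gpos m.+1 (face r m.+3)].
    apply: (Fix_in hr hP fP). apply: In_map_mem. rewrite mem_rev mem_iota add1n ltnS leqnn. by [].
  apply: (Fix_trans ftop). have := IH (face r m.+3).
  by rewrite -front_face0 -front_face1.
Qed.

Lemma FF k (r : cell B k.+1) :
  FixB (cid B k.+1 r) ([:: gpos 0 (front r)] ++ cid B k (face r 0) ++ [:: gneg 0 (front r)]) /\
  forall i, 0 < i <= k.+1 -> FixB (cid B k.+1 r) (cid B k (face r i)).
Proof.
case: k r => [|[|m]] r.
- split; first exact: (idem_uu _ [:: gpos 0 r]).
  move=> i hi. exact: Fix_nil.
- have hb := Fix_bl 0 r. have hr := idem_rho 0 r. split.
  + exact: (@Fix_prefix _ _ _ [:: gpos 0 (face r 2); gpos 0 (face r 0)] [:: gneg 0 (face r 1)] hr hb).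
  + case=> [|[|[|i]]] // _.
    * have h := Fix_inv hr hb.
      exact: (@Fix_prefix _ _ _ [:: gpos 0 (face r 1)] _ hr h).
    * exact: (@Fix_prefix _ _ _ [:: gpos 0 (face r 2)] _ hr hb).
- have hb := Fix_bl m.+1 r. rewrite /bl_gen in hb.
  set P := [seq gpos m.+1 (face r i) | i <- rev (iota 1 m.+3)] in hb.
  have hP : allidem (@Brel B) P.
    rewrite /P. elim: (rev (iota 1 m.+3)) => [|i s IHs] //=. split=> //. exact: idem_rho.
  have hr := idem_rho m.+1 r.
  have fP : FixB [:: gpos m.+2 r] P.
    apply: Fix_allidem => //. exact: (@Fix_prefix _ _ _ P _ hr hb).
  split.
  + exact: (Fix_suffix fP hb).
  + move=> i hi. apply: (Fix_in hr hP fP). apply: In_map_mem.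
    rewrite mem_rev mem_iota. by rewrite add1n ltnS.
Qed.

Lemma FE k (r : cell B k.+1) :
  FixB (cid B k.+1 r) [:: gpos 0 (front r); gneg 0 (front r)].
Proof.
have h := (FF k r).1.
have := (@Fix_prefix _ _ _ [:: gpos 0 (front r)] _ (idem_cid _ _) h). by [].
Qed.
End BFacts.

Section HFacts.
Variable B : DeltaComplex.
Variable H : word B -> Prop.
Hypothesis HH : closed_inv_submonoid H.
Local Notation E := (icong (@Brel B)).

Lemma H_E a b : E a b -> H a -> H b.
Proof. exact: HH.1.1. Qed.
Lemma H_nil : H [::].
Proof. exact: HH.1.2.1. Qed.
Lemma H_cat a b : H a -> H b -> H (a ++ b).
Proof. exact: HH.1.2.2.1. Qed.
Lemma H_inv a : H a -> H (inv a).
Proof. exact: HH.1.2.2.2. Qed.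

Lemma H_drop w a e b : idem (@Brel B) e -> H w -> w = a ++ e ++ b -> H (a ++ b).
Proof. move=> he hw ew. subst w. exact: (HH.2 _ _ hw I (L2 a b he)). Qed.

Lemma H_fix m e w : idem (@Brel B) e -> Fix (@Brel B) e w ->
  H (m ++ e ++ inv m) -> H (m ++ w ++ inv m).
Proof.
move=> he hf h.
have h1 : H (m ++ (e ++ w) ++ inv m).
  apply: H_E h. apply: E_l. apply: E_r. exact: ic_sym hf.
apply: (H_drop _ m e (w ++ inv m) he h1). by rewrite -!catA.
Qed.

Definition Good (m : word B) := H (m ++ inv m).
Definition cls (m : word B) : word B -> Prop := fun n => Good n /\ H (m ++ inv n).
Definition shiftS (S : word B -> Prop) (w : word B) : word B -> Prop :=
  fun n => Good n /\ exists m, S m /\ H (m ++ w ++ inv n).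

Lemma Good_prefix p q : Good (p ++ q) -> Good p.
Proof.
rewrite /Good inv_word_cat => h. apply: (H_drop _ p (q ++ inv q) (inv p) (idem_uu _ q) h).
by rewrite -!catA.
Qed.

Lemma H_sym m n : H (m ++ inv n) -> H (n ++ inv m).
Proof. move=> h. have := H_inv _ h. by rewrite inv_word_cat inv_wordK. Qed.

Lemma H_trans m n p : H (m ++ inv n) -> H (n ++ inv p) -> H (m ++ inv p).
Proof.
move=> h1 h2. have h := H_cat _ _ h1 h2.
apply: (H_drop _ m (inv n ++ n) (inv p) (idem_uu' _ n) h). by rewrite -!catA.
Qed.

Lemma cls_eq m n : Good m -> Good n -> H (m ++ inv n) -> cls m = cls n.
Proof.
move=> gm gn h. apply: functional_extensionality => p. apply: propositional_extensionality.
rewrite /cls. split; move=> [gp hp]; split=> //.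
- exact: H_trans (H_sym _ _ h) hp.
- exact: H_trans h hp.
Qed.

Lemma cls_self m : Good m -> cls m m.
Proof. by move=> g; split. Qed.

Lemma cls_H m n : Good n -> cls m = cls n -> H (m ++ inv n).
Proof. move=> g e. have := cls_self _ g. by rewrite -e => [[_ ?]]. Qed.

Lemma shift_cls m w : Good (m ++ w) -> shiftS (cls m) w = cls (m ++ w).
Proof.
move=> g. apply: functional_extensionality => n. apply: propositional_extensionality.
rewrite /shiftS /cls. split.
- move=> [gn [m1 [[gm1 h1] h2]]]. split=> //.
  have h := H_cat _ _ h1 h2.
  rewrite -catA. apply: (H_drop _ m (inv m1 ++ m1) (w ++ inv n) (idem_uu' _ m1) h).
  by rewrite -!catA.
- move=> [gn h]. split=> //. exists m. split; last by rewrite catA.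
  apply: cls_self. exact: Good_prefix g.
Qed.

Lemma transfer m0 m w : Good m0 -> Good m -> H (m ++ inv m0) -> Good (m0 ++ w) ->
  Good (m ++ w) /\ cls (m0 ++ w) = cls (m ++ w).
Proof.
move=> g0 g h g0w.
have gmw : Good (m ++ w).
  have P := H_cat _ _ (H_cat _ _ h g0w) (H_sym _ _ h).
  rewrite /Good inv_word_cat in P *.
  have P1 : H (m ++ (w ++ inv w ++ inv m0 ++ m0 ++ inv m)).
    apply: (H_drop _ m (inv m0 ++ m0) _ (idem_uu' _ m0) P). by rewrite ?inv_word_cat -!catA.
  have P2 : H ((m ++ w ++ inv w) ++ inv m).
    apply: (H_drop _ (m ++ w ++ inv w) (inv m0 ++ m0) _ (idem_uu' _ m0) P1). by rewrite -!catA.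
  move: P2; by rewrite ?inv_word_cat -!catA.
split=> //. apply: cls_eq => //.
have P := H_cat _ _ (H_sym _ _ h) gmw.
rewrite /Good !inv_word_cat in P *.
rewrite -!catA. apply: (H_drop _ m0 (inv m ++ m) _ (idem_uu' _ m) P). by rewrite -!catA.
Qed.
End HFacts.

Section Cons.
Variables (B C : DeltaComplex) (fC : forall k, cell C k -> cell B k).
Hypothesis HfC : is_immersion fC.
Variable u : cell C 0.
Variable H : word B -> Prop.
Hypothesis HH : closed_inv_submonoid H.
Hypothesis Hsub : subset_w H (Loop fC u).

Local Notation Good := (Good B H).
Local Notation cls := (cls B H).
Local Notation shiftS := (shiftS B H).

Definition valid k (p : (word B -> Prop) * cell C k) : Prop :=
  exists m, p.1 = cls m /\ Good m /\ actw fC u m (root p.2) /\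
    H (m ++ cid B k (fC k p.2) ++ inv m).

Definition cellH k := {p : (word B -> Prop) * cell C k | valid k p}.

Definition xl k (c : cell C k.+1) : letter B := gpos 0 (fC 1 (front c)).

Definition rface k (p : (word B -> Prop) * cell C k.+1) (i : nat) :
    (word B -> Prop) * cell C k :=
  if i == 0 then (shiftS p.1 [:: xl k p.2], face p.2 0)
  else (p.1, face p.2 (minn i k.+1)).

Lemma xl_front k (c : cell C k.+1) : xl k c = gpos 0 (front (fC k.+1 c)).
Proof. by rewrite /xl (morph_front _ _ _ HfC.1). Qed.

Lemma valid_edge k (c : cell C k.+1) m :
  H (m ++ cid B k.+1 (fC k.+1 c) ++ inv m) -> Good (m ++ [:: xl k c]).
Proof.
move=> h. rewrite /Good inv_word_cat xl_front.
have := H_fix B H HH m _ _ (idem_cid _ _ _) (FE B k (fC k.+1 c)) h.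
by rewrite -!catA.
Qed.

Lemma valid_rface k p i : valid k.+1 p -> valid k (rface k p i).
Proof.
case: p => S c [m [/= -> [gm [hu hc]]]].
have Hm := HfC.1.
have [F0 F1] := FF B k (fC k.+1 c).
rewrite /rface. case: ifP => [_|i0].
- have gx := valid_edge k c m hc.
  exists (m ++ [:: xl k c]). split; first by rewrite /= shift_cls.
  split=> //. split.
  + apply/(actw_cat _ _ fC). exists (root c). split=> //.
    apply/(actw1 _ _ fC). exists (front c). split=> //. by rewrite src_front tgt_front.
  + rewrite /= Hm // inv_word_cat xl_front.
    have := H_fix B H HH m _ _ (idem_cid _ _ _) F0 hc. by rewrite -!catA.
- exists m. split=> //. split=> //. split.
  + have ii : (0 < minn i k.+1 <= k.+1)%N by move/negbT: i0; lia.
    by rewrite /= root_face.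
  + rewrite /= Hm; last by rewrite geq_minr.
    apply: (H_fix B H HH m _ _ (idem_cid _ _ _) _ hc). apply: F1.
    move/negbT: i0; lia.
Qed.

Definition faceH k (d : cellH k.+1) (i : nat) : cellH k :=
  exist _ (rface k (proj1_sig d) i) (valid_rface k _ i (proj2_sig d)).

Lemma cellH_eq k (d d' : cellH k) : proj1_sig d = proj1_sig d' -> d = d'.
Proof.
case: d => p hp; case: d' => p' hp' /= e. subst p'. f_equal. exact: proof_irrelevance.
Qed.

Lemma minn_l a b : a <= b -> minn a b = a.
Proof. by move/minn_idPl. Qed.

Lemma faceH_face k (c : cellH k.+2) i j : i < j -> j <= k.+2 ->
  faceH k (faceH k.+1 c j) i = faceH k (faceH k.+1 c i) j.-1.
Proof.
move=> ij jk. apply: cellH_eq.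
case: c => [[S c] [m [/= eS [gm [hu hc]]]]]. subst S.
rewrite /faceH /rface /=.
have Hm := HfC.1.
case: j ij jk => [//|j] ij jk.
rewrite /= (minn_l _ _ jk).
case: i ij => [|i] ij /=.
- case: j ij jk => [|j] _ jk /=.
  +
    rewrite ?minn_l //.
    have ft := FT B k (fC k.+2 c).
    set x12 := gpos 0 (front (fC k.+2 c)) in ft.
    set x23 := gpos 0 (front (face (fC k.+2 c) 0)) in ft.
    set x13 := gpos 0 (front (face (fC k.+2 c) 1)) in ft.
    have e12 : xl k.+1 c = x12 by rewrite xl_front.
    have e23 : xl k (face c 0) = x23 by rewrite xl_front Hm.
    have e13 : xl k (face c 1) = x13 by rewrite xl_front Hm.
    rewrite e12 e23 e13.
    have hid := idem_cid B k.+2 (fC k.+2 c).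
    have T := H_fix B H HH m _ _ hid ft hc.
    have g12 : Good (m ++ [:: x12]) by rewrite -e12; apply: valid_edge.
    have g123 : Good (m ++ [:: x12; x23]).
      have f2 := @Fix_prefix _ _ _ [:: x12; x23] [:: gneg 0 (front (face (fC k.+2 c) 1))] hid ft.
      have := H_fix B H HH m _ _ hid f2 hc. by rewrite /Good inv_word_cat -!catA.
    have g13 : Good (m ++ [:: x13]).
      have f3 := @Fix_prefix _ _ _ [:: x13] _ hid (Fix_inv hid ft).
      have := H_fix B H HH m _ _ hid f3 hc. by rewrite /Good inv_word_cat -!catA.
    rewrite (shift_cls B H HH) // (shift_cls B H HH) // (shift_cls B H HH); last by rewrite -catA.
    rewrite face_face //. congr pair.
    apply: (cls_eq B H HH) => //; first by rewrite -catA.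
    apply: H_sym => //. move: T. by rewrite !inv_word_cat -!catA.
  + rewrite minn_l; last by rewrite -ltnS.
    have ff : front (face c j.+2) = front c.
      apply: front_face. by rewrite jk.
    rewrite /xl ff face_face //.
- case: j ij jk => [//|j] ij jk /=.
  rewrite !minn_l //; try lia.
  rewrite face_face //.
Qed.

Definition DH : DeltaComplex := @Build_DeltaComplex cellH faceH faceH_face.

Definition fHH (k : nat) (d : cell DH k) : cell C k := (proj1_sig d).2.
Definition fDH (k : nat) (d : cell DH k) : cell B k := fC k (proj1_sig d).2.

Lemma fHH_morph : is_morphism fHH.
Proof.
move=> k d i hi. rewrite /fHH /= /rface. case: ifP => [/eqP -> //|_] /=.
by rewrite minn_l.
Qed.

Lemma fDH_morph : is_morphism fDH.
Proof. move=> k d i hi. rewrite /fDH -HfC.1 //. by rewrite -fHH_morph. Qed.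

Lemma root_H k (d : cell DH k) : proj1_sig (root d) = ((proj1_sig d).1, root (proj1_sig d).2).
Proof.
elim: k d => [|k IH] d.
- case: (proj1_sig d) => //.
- rewrite root_S IH /= /rface /=. by rewrite minnn.
Qed.

Lemma vert_inj k (d d' : cell DH k) i :
  (proj1_sig d).2 = (proj1_sig d').2 -> vert d i = vert d' i -> d = d'.
Proof.
elim: k d d' i => [|k IH] d d' i e2.
- by [].
- rewrite /=. case: ifP => _ hv.
  + have := IH _ _ _ _ hv. rewrite /= /rface /= minnn e2. move=> /(_ erefl) e.
    have e1 := f_equal (fun x => (proj1_sig x).1) e. simpl in e1.
    apply: cellH_eq. move: e1 e2. case: (proj1_sig d) => ??; case: (proj1_sig d') => ?? /= -> -> //.
  + have := IH (faceH k d 0) (faceH k d' 0) _ _ hv. rewrite /= /rface /= e2. move=> /(_ erefl) e.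
    have e1 := f_equal (fun x => (proj1_sig x).1) e. simpl in e1.
    apply: cellH_eq. clear hv e.
    move: e1 e2. case: d => [[S c] [m [/= eS [gm [_ hc]]]]]; case: d' => [[S' c'] [m' [/= eS' [gm' [_ hc']]]]] /=.
    subst S S'. move=> e1 e2. subst c'.
    have g1 := valid_edge k c m hc. have g2 := valid_edge k c m' hc'.
    rewrite !(shift_cls B H HH) // in e1.
    have h := cls_H B H _ _ g2 e1. rewrite inv_word_cat in h.
    have h' : H (m ++ inv m') by apply: (H_drop B H HH _ m ([:: xl k c] ++ inv [:: xl k c]) (inv m')
      (idem_uu _ _) h); rewrite -!catA.
    by rewrite (cls_eq B H HH _ _ gm gm' h').
Qed.

Lemma fHH_imm : is_immersion fHH.
Proof.
split; first exact: fHH_morph.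
move=> k d d' i _ hv he. exact: vert_inj he hv.
Qed.

Lemma fDH_imm : is_immersion fDH.
Proof.
split; first exact: fDH_morph.
move=> k d d' i hi hv he. apply: (vert_inj k d d' i) => //.
apply: (HfC.2 k _ _ i hi) => //.
have := f_equal (fHH 0) hv. by rewrite !(morph_vert _ _ _ fHH_morph).
Qed.

Local Notation E := (icong (@Brel B)).

Lemma Good_uu m w : Good (m ++ w) -> Good ((m ++ w) ++ inv w) /\ H ((m ++ w ++ inv w) ++ inv m).
Proof.
move=> g. split.
- rewrite /Good. apply: (H_E B H HH _ _ _ g). rewrite !inv_word_cat inv_wordK -!catA.
  apply: E_l. rewrite !catA. apply: E_r. rewrite -!catA. apply: ic_sym. have := idem_uu (@Brel B) w. by rewrite /idem -!catA.
- move: g. by rewrite /Good inv_word_cat -!catA.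
Qed.

Lemma letter_rho j (r : cell B j.+2) b :
  E [:: (existT (fun j => cell B j.+1) j.+1 r, b)] [:: gpos j.+1 r].
Proof.
case: b; last by [].
exact: (idem_inv (idem_rho B j r)).
Qed.

Lemma Good_rho m j (r : cell B j.+2) b :
  Good (m ++ [:: (existT (fun j => cell B j.+1) j.+1 r, b)]) <-> H (m ++ [:: gpos j.+1 r] ++ inv m).
Proof.
have e : E ([:: (existT (fun j => cell B j.+1) j.+1 r, b)] ++ inv [:: (existT (fun j => cell B j.+1) j.+1 r, b)]) [:: gpos j.+1 r].
  rewrite (inv_E (letter_rho j r b)) (letter_rho j r b) (idem_inv (idem_rho B j r)). exact: (idem_rho B j r).
rewrite /Good inv_word_cat -catA. split=> h; apply: (H_E B H HH _ _ _ h); apply: E_l; rewrite ?catA; apply: E_r.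
- exact: e.
- exact: ic_sym e.
Qed.

Lemma cls_rho m j (r : cell B j.+2) b :
  Good m -> Good (m ++ [:: (existT (fun j => cell B j.+1) j.+1 r, b)]) ->
  cls (m ++ [:: (existT (fun j => cell B j.+1) j.+1 r, b)]) = cls m.
Proof.
move=> g g1. apply: (cls_eq B H HH) => //. move/Good_rho: g1 => h.
rewrite -catA. apply: (H_E B H HH _ _ _ h). apply: E_l. apply: E_r. exact: ic_sym (letter_rho j r b).
Qed.

Lemma vV m c : Good m -> actw fC u m c -> valid 0 (cls m, c).
Proof. move=> g h. exists m. by split. Qed.

Lemma ACT1 (d : cell DH 0) m c l (d1 : cell DH 0) :
  proj1_sig d = (cls m, c) -> Good m -> actw fC u m c ->
  act fDH d l d1 <->
  Good (m ++ [:: l]) /\ exists c1, act fC c l c1 /\ proj1_sig d1 = (cls (m ++ [:: l]), c1).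
Proof.
move=> hd gm hu.
case: l => [[[|j] r] b] /=.
- case: b => /=.
  + split.
    * move=> [[[S e] [m0 [/= eS [gm0 [hu0 hc0]]]]] [he [hs ht]]]. subst S.
      rewrite /fDH /= in he.
      have := f_equal (@proj1_sig _ _) ht. rewrite /= /rface /= hd.
      move=> [e1 e2]. have g0x := valid_edge 0 e m0 hc0.
      rewrite /xl /= he in e1 g0x. rewrite (shift_cls B H HH) // in e1.
      have h1 := cls_H B H _ _ g0x (esym e1).
      set x := gpos 0 r in e1 g0x h1.
      have g0xx : Good ((m0 ++ [:: x]) ++ [:: gneg 0 r]) by exact: (Good_uu _ [:: x] g0x).1.
      have [gmx ecl] := transfer B H HH _ _ [:: gneg 0 r] g0x gm h1 g0xx.
      split=> //. exists (src e). split.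
        exists e. do !split => //.
      rewrite -(f_equal (@proj1_sig _ _) hs) /= /rface /=. rewrite -ecl. congr pair.
      apply: (cls_eq B H HH) => //.
      move: (Good_uu _ [:: x] g0x).2. by rewrite !inv_word_cat -!catA.
    * move=> [gx [c1 [[e [he [h1 h2]]] hd1]]].
      have gxx := (Good_uu _ _ gx).1.
      have ve : valid 1 (cls (m ++ [:: gneg 0 r]), e).
        exists (m ++ [:: gneg 0 r]). split=> //. split=> //. split.
          apply/(actw_cat _ _ fC). exists c. split=> //. apply/(actw1 _ _ fC).
          exists e. by rewrite h1 h2.
        rewrite /= he. move: gxx. by rewrite /Good !inv_word_cat -!catA.
      exists (exist _ _ ve). split; first by rewrite /fDH /= he.
      split; apply: cellH_eq; rewrite /= /rface /=.
      - by rewrite hd1 -h1.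
      - rewrite hd -h2 (shift_cls B H HH) /xl /= he; last exact: gxx.
        congr pair. apply: (cls_eq B H HH) => //.
        move: (Good_uu _ _ gx).2. by rewrite -!catA.
  + split.
    * move=> [[[S e] [m0 [/= eS [gm0 [hu0 hc0]]]]] [he [hs ht]]]. subst S.
      rewrite /fDH /= in he.
      have := f_equal (@proj1_sig _ _) hs. rewrite /= /rface /= hd.
      move=> [e1 e2]. subst c.
      have h1 := cls_H B H _ _ gm0 (esym e1).
      have g0x := valid_edge 0 e m0 hc0. rewrite /xl /= he in g0x.
      have [gmx ecl] := transfer B H HH _ _ [:: gpos 0 r] gm0 gm h1 g0x.
      split=> //. exists (tgt e). split; first by exists e.
      by rewrite -(f_equal (@proj1_sig _ _) ht) /= /rface /= /xl /= he (shift_cls B H HH) // ecl.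
    * move=> [gx [c1 [[e [he [h1 h2]]] hd1]]].
      have ve : valid 1 (cls m, e).
        exists m. split=> //. split=> //. split; first by have -> : root e = c by exact: h1.
        rewrite /= he. move: gx. by rewrite /Good !inv_word_cat -!catA.
      exists (exist _ _ ve). split; first by rewrite /fDH /= he.
      split; apply: cellH_eq; rewrite /= /rface /=.
      - by rewrite hd -h1.
      - rewrite hd1 -h2 (shift_cls B H HH) /xl /= ?he //.
- set l := (existT (fun j => cell B j.+1) j.+1 r, b).
  split.
  + move=> [-> [[[S e] [m0 [/= eS [gm0 [hu0 hc0]]]]] [he hr]]]. subst S.
    rewrite /fDH /= in he.
    have := f_equal (@proj1_sig _ _) hr. rewrite root_H /= hd. move=> [e1 e2].
    have h1 := cls_H B H _ _ gm0 (esym e1).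
    have hc0' : H (m0 ++ [:: gpos j.+1 r] ++ inv m0) by have := hc0; rewrite /= he.
    have g0l : Good (m0 ++ [:: l]) by apply/Good_rho; exact: hc0'.
    have [gml ecl] := transfer B H HH _ _ [:: l] gm0 gm h1 g0l.
    split=> //. exists c. split.
      split=> //. exists e. by rewrite he e2.
    by rewrite cls_rho.
  + move=> [gl [c1 [[e1 [e [he hr]]] hd1]]]. subst c1.
    have dd : d1 = d by apply: cellH_eq; rewrite hd1 hd cls_rho.
    split=> //.
    have ve : valid j.+2 (cls m, e).
      exists m. split=> //. split=> //. split; first by rewrite /= hr.
      rewrite /= he. exact/(Good_rho m j r b).
    exists (exist _ _ ve). split; first by rewrite /fDH /= he.
    apply: cellH_eq. by rewrite root_H /= hd hr.
Qed.

Lemma ACTH w : forall (d : cell DH 0) m c, proj1_sig d = (cls m, c) -> Good m ->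
  actw fC u m c -> forall d',
  actw fDH d w d' <-> Good (m ++ w) /\ exists c', actw fC c w c' /\ proj1_sig d' = (cls (m ++ w), c').
Proof.
elim: w => [|l w IH] d m c hd gm hu d' /=.
- rewrite cats0. split.
  + move=> ->. split=> //. by exists c.
  + move=> [_ [c' [-> h]]]. apply: cellH_eq. by rewrite h hd.
- split.
  + move=> [d1 [h1 h2]].
    have [gl [c1 [a1 hd1]]] := proj1 (ACT1 d m c l d1 hd gm hu) h1.
    have hu1 : actw fC u (m ++ [:: l]) c1.
      apply/(actw_cat _ _ fC). exists c; split=> //. by apply/(actw1 _ _ fC).
    have [g2 [c' [a2 hd2]]] := proj1 (IH d1 _ _ hd1 gl hu1 d') h2.
    rewrite -catA in g2 hd2. split=> //. exists c'. split=> //. by exists c1.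
  + move=> [g [c' [[c1 [a1 a2]] hd']]].
    have gl : Good (m ++ [:: l]).
      apply: (Good_prefix B H HH _ w). by rewrite -catA.
    have hu1 : actw fC u (m ++ [:: l]) c1.
      apply/(actw_cat _ _ fC). exists c; split=> //. by apply/(actw1 _ _ fC).
    pose d1 : cell DH 0 := exist _ (cls (m ++ [:: l]), c1) (vV _ _ gl hu1).
    exists d1. split.
    * apply/(ACT1 d m c l d1 hd gm hu). split=> //. by exists c1.
    * apply/(IH d1 (m ++ [:: l]) c1 erefl gl hu1 d'). rewrite -catA. split=> //.
      exists c'. by rewrite hd'.
Qed.

Lemma Good_nil : Good [::].
Proof. exact: (H_nil B H HH). Qed.

Definition baseH : cell DH 0 := exist _ (cls [::], u) (vV [::] u Good_nil erefl).

Lemma LoopH w : Loop fDH baseH w <-> H w.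
Proof.
rewrite /Loop (ACTH w baseH [::] u erefl Good_nil erefl baseH) /=.
split.
- move=> [g [c' [_ e]]]. case: e => e _.
  have := cls_H B H _ _ Good_nil (esym e). by rewrite cats0.
- move=> hw.
  have gw : Good w by apply: (H_cat B H HH); [|apply: (H_inv B H HH)].
  split=> //. exists u. split; first exact: Hsub.
  congr pair. apply: (cls_eq B H HH) => //. exact: Good_nil. exact: (H_inv B H HH _ hw).
Qed.

Lemma actw_vconn (B' D' : DeltaComplex) (fD' : forall k, cell D' k -> cell B' k) x w y :
  actw fD' x w y -> vconn x y.
Proof.
elim: w x => [|l w IH] x /=; first by move=> ->; exact: vc_refl.
move=> [z [h1 h2]]. apply: (vc_trans _ (IH _ h2)).
move: h1. case: l => [[[|j] r] b] /=.
- case: b => [[e [_ [<- <-]]]|[e [_ [<- <-]]]].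
  + apply: vc_sym; exact: vc_edge.
  + exact: vc_edge.
- move=> [-> _]. exact: vc_refl.
Qed.

Lemma DH_connected : connected DH.
Proof.
have hb : forall d : cell DH 0, vconn baseH d.
  move=> d. case: (proj2_sig d) => m [eS [gm [hu _]]].
  apply: (actw_vconn _ _ fDH baseH m).
  apply/(ACTH m baseH [::] u erefl Good_nil erefl). split=> //. exists (proj1_sig d).2.
  split=> //. rewrite /= -eS. by case: (proj1_sig d).
move=> x y. apply: (vc_trans (vc_sym (hb x)) (hb y)).
Qed.

Lemma DH_cover : cover_data fC u H fDH fHH baseH.
Proof.
split; first exact: DH_connected.
split; first exact: fDH_imm.
split; first exact: fHH_imm.
split; first by [].
split; first by [].
exact: LoopH.
Qed.

End Cons.


Set Implicit Arguments.
Theorem mainTheorem13 (B : DeltaComplex)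
    (HB1 : single_vertex B) (HB2 : finite_dim B) :
  (* (1) *)
  (forall (C D : DeltaComplex) (fC : forall k, cell C k -> cell B k)
          (fD : forall k, cell D k -> cell B k)
          (f : forall k, cell D k -> cell C k),
      connected C -> connected D ->
      is_immersion fC -> is_immersion fD -> is_immersion f ->
      (forall k x, fC k (f k x) = fD k x) ->
      forall v : cell D 0,
        subset_w (Loop fD v) (Loop fC (f 0 v)) /\
        closed_inv_submonoid_of (Loop fC (f 0 v)) (Loop fD v)) /\
  (* (2) *)
  (forall (C : DeltaComplex) (fC : forall k, cell C k -> cell B k),
      connected C -> is_immersion fC ->
      forall (u : cell C 0) (H : word B -> Prop),
        closed_inv_submonoid H -> subset_w H (Loop fC u) ->
        exists (D : DeltaComplex) (fD : forall k, cell D k -> cell B k)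
               (fH : forall k, cell D k -> cell C k) (v : cell D 0),
          cover_data fC u H fD fH v /\
          forall (D' : DeltaComplex) (fD' : forall k, cell D' k -> cell B k)
                 (fH' : forall k, cell D' k -> cell C k) (v' : cell D' 0),
            cover_data fC u H fD' fH' v' ->
            exists h : forall k, cell D k -> cell D' k,
              is_iso h /\ (forall k x, fD' k (h k x) = fD k x) /\
              (forall k x, fH' k (h k x) = fH k x) /\ h 0 v = v') /\
  (* (3) *)
  (forall (C : DeltaComplex) (fC : forall k, cell C k -> cell B k),
      connected C -> is_immersion fC ->
      forall (u : cell C 0) (H K : word B -> Prop),
        closed_inv_submonoid H -> subset_w H (Loop fC u) ->
        closed_inv_submonoid K -> subset_w K (Loop fC u) ->
        forall (DH : DeltaComplex) (fDH : forall k, cell DH k -> cell B k)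
               (fH : forall k, cell DH k -> cell C k) (vH : cell DH 0)
               (DK : DeltaComplex) (fDK : forall k, cell DK k -> cell B k)
               (fK : forall k, cell DK k -> cell C k) (vK : cell DK 0),
          cover_data fC u H fDH fH vH -> cover_data fC u K fDK fK vK ->
          ((exists h : forall k, cell DH k -> cell DK k,
              is_iso h /\ (forall k x, fK k (h k x) = fH k x)) <->
           conjugate_in (Loop fC u) H K)).
Proof.
split.
- move=> C D fC fD f _ _ HfC HfD Hf Hc v.
  exact: (part1 B C D fC fD f HfD Hf Hc v).
split.
- move=> C fC Hcon HfC u H HH Hsub.
  exists (DH B C fC HfC u H HH), (fDH B C fC HfC u H HH), (fHH B C fC HfC u H HH),
    (baseH B C fC HfC u H HH).
  split; first exact: (DH_cover B C fC HfC u H HH Hsub).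
  move=> D' fD' fH' v' cd'.
  exact: (uniq_cover B C fC HB1 HfC u H _ _ _ _ D' fD' fH' v' (DH_cover B C fC HfC u H HH Hsub) cd').
- move=> C fC Hcon HfC u H K HH Hsub HK Ksub DH' fDH' fH vH DK fDK fK vK cdH cdK.
  exact: (part3 B C fC HB1 HfC u H K HH HK DH' fDH' fH vH DK fDK fK vK cdH cdK).
Qed.
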